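(* Let $\Omega\subset\mathbb{R}^d$ be open and $H:\overline\Omega\times\mathbb{R}^d\to\mathbb{R}$ be such that for a.e. $x\in\Omega$, $H(x,\cdot)\in C^1(\mathbb{R}^d)$ and $H(x,\cdot)$ is convex, and suppose there is $C>1$ with $|D_pH(x,p)|\le C|p|^{\alpha-1}+C$ and $H(x,0)\le C$ for a.e. $x\in\Omega$ and all $p\in\mathbb{R}^d$, where $\alpha>1$. Consider the conditions, each required for a.e. $x\in\Omega$ and all $p\in\mathbb{R}^d$ with some constant $C>1$: (a) $H(x,p)\ge C^{-1}|p|^\alpha-C$; (b) $D_pH(x,p)\cdot p\ge C^{-1}|p|^\alpha-C$ and $H(x,p)\ge-C$; (c) $-H(x,p)+D_pH(x,p)\cdot p\ge C^{-1}|p|^\alpha-C$ and $H(x,p)\ge-C$. Then (a), (b), (c) are equivalent (with the constant $C$ possibly changing). *)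

(* Defs.v *)
From HB Require Import structures.
From mathcomp Require Import all_boot all_order all_algebra.
From mathcomp Require Import all_classical all_reals all_analysis.
Set Implicit Arguments. Unset Strict Implicit. Unset Printing Implicit Defensive.
Import Order.TTheory GRing.Theory Num.Theory.
Import numFieldNormedType.Exports.
Local Open Scope classical_set_scope.
Local Open Scope ring_scope.

Section Defs.
Variables (R : realType) (d : nat).

Definition vdot (p q : 'rV[R]_d) : R := \sum_(i < d) p ord0 i * q ord0 i.
Definition enorm (p : 'rV[R]_d) : R := Num.sqrt (vdot p p).

Definition box (a b : 'rV[R]_d) : set 'rV[R]_d :=
  [set x | forall i, a ord0 i <= x ord0 i <= b ord0 i].
Definition box_vol (a b : 'rV[R]_d) : R :=
  \prod_(i < d) Num.max 0 (b ord0 i - a ord0 i).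

Definition lebesgue_null (N : set 'rV[R]_d) : Prop :=
  forall eps : R, 0 < eps -> exists a b : nat -> 'rV[R]_d,
    N `<=` \bigcup_k box (a k) (b k) /\
    forall n, \sum_(k < n) box_vol (a k) (b k) <= eps.

Definition ae_in (Omega : set 'rV[R]_d) (P : 'rV[R]_d -> Prop) : Prop :=
  exists N, lebesgue_null N /\ forall x, Omega x -> ~ N x -> P x.

Definition convex_fun (f : 'rV[R]_d -> R) : Prop :=
  forall (p q : 'rV[R]_d) (t : R), 0 <= t <= 1 ->
    f ((1 - t) *: p + t *: q) <= (1 - t) * f p + t * f q.

Definition C1_with_gradient (f : 'rV[R]_d -> R) (g : 'rV[R]_d -> 'rV[R]_d) : Prop :=
  (forall p, differentiable f p /\ forall h, 'd f p h = vdot (g p) h) /\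
  continuous g.

Definition cond_a (Omega : set 'rV[R]_d) (H : 'rV[R]_d -> 'rV[R]_d -> R)
    (alpha C : R) : Prop :=
  ae_in Omega (fun x => forall p, H x p >= C^-1 * enorm p `^ alpha - C).

Definition cond_b (Omega : set 'rV[R]_d) (H : 'rV[R]_d -> 'rV[R]_d -> R)
    (DH : 'rV[R]_d -> 'rV[R]_d -> 'rV[R]_d) (alpha C : R) : Prop :=
  ae_in Omega (fun x => forall p,
    vdot (DH x p) p >= C^-1 * enorm p `^ alpha - C /\ H x p >= - C).

Definition cond_c (Omega : set 'rV[R]_d) (H : 'rV[R]_d -> 'rV[R]_d -> R)
    (DH : 'rV[R]_d -> 'rV[R]_d -> 'rV[R]_d) (alpha C : R) : Prop :=
  ae_in Omega (fun x => forall p,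
    - H x p + vdot (DH x p) p >= C^-1 * enorm p `^ alpha - C /\ H x p >= - C).

End Defs.

(* Main.v *)
Require Import Defs.
From HB Require Import structures.
From mathcomp Require Import all_boot all_order all_algebra.
From mathcomp Require Import all_classical all_reals all_analysis.
From mathcomp Require Import ring lra.
Import Order.TTheory GRing.Theory Num.Theory.
Import numFieldNormedType.Exports.
Local Open Scope classical_set_scope.
Local Open Scope ring_scope.

Lemma right_sub (R : realType) (W : normedModType R) (f : R -> W) (l : W) :
  f @ 0^' --> l -> f @ 0^'+ --> l.
Proof.
move=> fl; apply: cvg_trans fl.
move=> A /=. rewrite /dnbhs /at_right /within /=.
move=> h. rewrite /nbhs /= in h *. apply: filterS h => x Ax x0.
by apply: Ax; rewrite gt_eqF.
Qed.

Section V.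
Variables (R : realType) (d : nat).
Implicit Types (a b c p : 'rV[R]_d).

Lemma vdotZr a b (k : R) : vdot a (k *: b) = k * vdot a b.
Proof.
rewrite /vdot mulr_sumr; apply: eq_bigr => i _; rewrite mxE; ring.
Qed.

Lemma vdotBr a b c : vdot a (b - c) = vdot a b - vdot a c.
Proof.
rewrite /vdot -sumrB; apply: eq_bigr => i _; rewrite !mxE; ring.
Qed.

Lemma vdotC a b : vdot a b = vdot b a.
Proof. by rewrite /vdot; apply: eq_bigr => i _; rewrite mulrC. Qed.

Lemma vdot_ge0 a : 0 <= vdot a a.
Proof. by rewrite /vdot; apply: sumr_ge0 => i _; rewrite -expr2 sqr_ge0. Qed.

Lemma enorm_ge0 a : 0 <= enorm a.
Proof. exact: sqrtr_ge0. Qed.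

Lemma enormZ a (k : R) : 0 <= k -> enorm (k *: a) = k * enorm a.
Proof.
move=> k0; rewrite /enorm vdotZr vdotC vdotZr mulrA sqrtrM ?mulr_ge0 //.
by rewrite -expr2 sqrtr_sqr ger0_norm.
Qed.

Lemma vdot0 a : vdot a a = 0 -> forall b, vdot a b = 0.
Proof.
move=> /eqP; rewrite /vdot psumr_eq0; last by move=> i _; rewrite -expr2 sqr_ge0.
move=> /allP H b; apply: big1 => i _.
have := H i (mem_index_enum i); rewrite /= mulf_eq0 orbb => /eqP ->; ring.
Qed.

Lemma cs a b : vdot a b <= enorm a * enorm b.
Proof.
set sA := enorm a; set sB := enorm b.
have hA : sA ^+ 2 = vdot a a by rewrite sqr_sqrtr // vdot_ge0.
have hB : sB ^+ 2 = vdot b b by rewrite sqr_sqrtr // vdot_ge0.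
have key : 2 * vdot a b * (sA * sB) <= 2 * (sA * sB) ^+ 2.
  have -> : 2 * (sA * sB) ^+ 2 = \sum_(i < d) (a ord0 i ^+ 2 * sB ^+ 2 + b ord0 i ^+ 2 * sA ^+ 2).
    rewrite big_split /= -!mulr_suml.
    have -> : \sum_(i < d) a ord0 i ^+ 2 = vdot a a by apply: eq_bigr => i _; rewrite expr2.
    have -> : \sum_(i < d) b ord0 i ^+ 2 = vdot b b by apply: eq_bigr => i _; rewrite expr2.
    rewrite -hA -hB; ring.
  rewrite /vdot mulr_sumr mulr_suml; apply: ler_sum => i _.
  have := sqr_ge0 (a ord0 i * sB - b ord0 i * sA); nra.
have sA0 : 0 <= sA := enorm_ge0 a.
have sB0 : 0 <= sB := enorm_ge0 b.
have [pos|] := ltrP 0 (sA * sB).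
  have : vdot a b * (2 * (sA * sB)) <= (sA * sB) * (2 * (sA * sB)) by nra.
  by rewrite ler_pM2r // mulr_gt0.
move=> le0.
have : sA * sB = 0 by apply/eqP; rewrite eq_le le0 mulr_ge0.
move/eqP; rewrite mulf_eq0 => /orP [] /eqP z.
  by rewrite vdot0 ?mulr_ge0 // -hA z expr0n.
by rewrite vdotC vdot0 ?mulr_ge0 // -hB z expr0n.
Qed.

Lemma box_vol_ge0 a b : 0 <= box_vol a b.
Proof. by apply: prodr_ge0 => i _; rewrite le_max lexx. Qed.

Lemma sum_mono (v : nat -> R) : (forall k, 0 <= v k) ->
  forall n m, (n <= m)%N -> \sum_(k < n) v k <= \sum_(k < m) v k.
Proof.
move=> v0 n; elim=> [|m IH]; first by rewrite leqn0 => /eqP ->.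
rewrite leq_eqVlt => /orP [/eqP ->//|]; rewrite ltnS => /IH h.
by rewrite big_ord_recr /= (le_trans h) // lerDl.
Qed.

Lemma null_union (N1 N2 : set 'rV[R]_d) :
  lebesgue_null N1 -> lebesgue_null N2 -> lebesgue_null (N1 `|` N2).
Proof.
move=> h1 h2 e e0.
have e2 : 0 < e / 2 by rewrite divr_gt0.
have [a1 [b1 [c1 s1]]] := h1 _ e2.
have [a2 [b2 [c2 s2]]] := h2 _ e2.
pose a k := if odd k then a2 k./2 else a1 k./2.
pose b k := if odd k then b2 k./2 else b1 k./2.
exists a, b; split.
  move=> x [/c1 [k _ Hk]|/c2 [k _ Hk]].
    by exists k.*2 => //; rewrite /a /b odd_double doubleK.
  by exists k.*2.+1 => //; rewrite /a /b /= odd_double /= uphalf_double.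
move=> n.
have tot : forall m, \sum_(k < m.*2) box_vol (a k) (b k) =
   \sum_(k < m) box_vol (a1 k) (b1 k) + \sum_(k < m) box_vol (a2 k) (b2 k).
  elim=> [|m IH]; first by rewrite !big_ord0 addr0.
  rewrite doubleS !big_ord_recr /= IH /a /b /= odd_double /= doubleK uphalf_double.
  ring.
have hm := @sum_mono (fun k => box_vol (a k) (b k)) (fun k => box_vol_ge0 _ _) n (n + n) (leq_addl n n).
simpl in hm; apply: le_trans hm _.
rewrite addnn tot.
have := s1 n; have := s2 n; lra.
Qed.

Lemma ae_and (Omega : set 'rV[R]_d) (P Q : 'rV[R]_d -> Prop) :
  ae_in Omega P -> ae_in Omega Q -> ae_in Omega (fun x => P x /\ Q x).
Proof.
move=> [N1 [n1 h1]] [N2 [n2 h2]]; exists (N1 `|` N2); split.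
  exact: null_union.
by move=> x Ox nN; split; [apply: h1 | apply: h2] => // H; apply: nN; [left|right].
Qed.

Lemma ae_mono (Omega : set 'rV[R]_d) (P Q : 'rV[R]_d -> Prop) :
  (forall x, P x -> Q x) -> ae_in Omega P -> ae_in Omega Q.
Proof. by move=> PQ [N [n h]]; exists N; split => // x Ox nN; apply: PQ; apply: h. Qed.


Lemma grad_ineq (h : 'rV[R]_d -> R) g p q :
  C1_with_gradient h g -> convex_fun h -> h p + vdot (g p) (q - p) <= h q.
Proof.
move=> [/(_ p) [dp dg] _] cvx.
have der : derivable h p (q - p) := diff_derivable dp.
have := @right_sub R _ _ _ der.
rewrite -/(derive h p (q - p)) deriveE // dg => cv.
rewrite addrC -lerBrDr.
apply: (cvgr_to_le cv).
near=> t.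
have t0 : 0 < t by near: t; exact: nbhs_right_gt.
have t1 : t <= 1 by near: t; exact: nbhs_right_le.
rewrite /= /shift /=.
have -> : t *: (q - p) + p = (1 - t) *: p + t *: q.
  by rewrite scalerBr scalerBl scale1r addrC addrA [RHS]addrAC.
have := cvx p q t; rewrite t1 ltW //= => /(_ isT) hc.
rewrite -[X in _ <= X](mulKf (lt0r_neq0 t0)).
rewrite [X in _ <= X]mulrA -[X in _ <= X]mulrA /= ler_pM2l ?invr_gt0 //.
lra.
Unshelve. all: by end_near.
Qed.

End V.
Arguments vdotZr {R d}.
Arguments vdotBr {R d}.
Arguments vdotC {R d}.
Arguments vdot_ge0 {R d}.
Arguments enorm_ge0 {R d}.
Arguments enormZ {R d}.
Arguments vdot0 {R d}.
Arguments cs {R d}.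
Arguments box_vol_ge0 {R d}.
Arguments null_union {R d}.
Arguments ae_and {R d Omega P Q}.
Arguments ae_mono {R d Omega P Q}.
Arguments grad_ineq {R d}.
Arguments sum_mono {R}.

Section P.
Variables (R : realType) (d : nat) (h : 'rV[R]_d -> R) (g : 'rV[R]_d -> 'rV[R]_d).
Variables (alpha C0 : R).
Hypothesis a1 : 1 < alpha.
Hypothesis C00 : 0 < C0.
Hypothesis hC1 : C1_with_gradient h g.
Hypothesis cvx : convex_fun h.
Hypothesis gg : forall p, enorm (g p) <= C0 * enorm p `^ (alpha - 1) + C0.
Hypothesis h0 : h 0 <= C0.

Lemma pw_ab c B : 0 <= c -> (forall p, c * enorm p `^ alpha - B <= h p) ->
  forall p, c * enorm p `^ alpha - (B + C0) <= vdot (g p) p /\ - B <= h p.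
Proof using a1 C00 hC1 cvx gg h0.
move=> c0 H p; split.
  have := grad_ineq h g p 0 hC1 cvx; rewrite sub0r.
  have -> : vdot (g p) (- p) = - vdot (g p) p.
    by rewrite -scaleN1r vdotZr mulN1r.
  move=> HH; have := H p; move=> HH2; have := h0; lra.
have := H p; have : 0 <= c * enorm p `^ alpha by rewrite mulr_ge0 // powR_ge0.
lra.
Qed.

Lemma pw_ba c B : 0 <= c -> (forall p, c * enorm p `^ alpha - B <= vdot (g p) p /\ - B <= h p) ->
  forall p, c * (2^-1) `^ alpha * enorm p `^ alpha - (B + B) <= h p.
Proof using a1 C00 hC1 cvx gg h0.
move=> c0 H p.
have k0 : (0 : R) <= 2^-1 by rewrite invr_ge0.
have := grad_ineq h g (2^-1 *: p) p hC1 cvx.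
have -> : p - 2^-1 *: p = 2^-1 *: p.
  by rewrite -{1}(scale1r p) -scalerBl; congr (_ *: _); field.
have [H1 H2] := H (2^-1 *: p).
move: H1; rewrite enormZ // powRM ?enorm_ge0 //.
lra.
Qed.

Lemma pw_bc c B : 0 < c -> (forall p, c * enorm p `^ alpha - B <= vdot (g p) p /\ - B <= h p) ->
  let mu := (c / (4 * C0)) `^ ((alpha - 1)^-1) in
  forall p, (mu * c / 2) * enorm p `^ alpha - (mu * B + 2 * C0) <= - h p + vdot (g p) p.
Proof using a1 C00 hC1 cvx gg h0.
move=> c0 H mu p.
have cC : 0 < c / (4 * C0) by rewrite divr_gt0 // mulr_gt0.
have mu0 : 0 < mu by apply: powR_gt0.
have muA : mu `^ (alpha - 1) = c / (4 * C0).
  by rewrite -powRrM mulVf ?powRr1 ?ltW // subr_eq0 gt_eqF.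
set q := mu *: p.
have e1 := grad_ineq h g p q hC1 cvx.
move: e1; rewrite vdotBr /q vdotZr => e1.
have e2 := grad_ineq h g q 0 hC1 cvx.
move: e2; rewrite sub0r -scaleN1r vdotZr mulN1r => e2.
have e3 := cs (g q) q.
have e4 := gg q.
have nq0 := enorm_ge0 q.
have e5 : enorm q <= 1 + enorm q `^ alpha.
  have [le1|gt1] := lerP (enorm q) 1.
    by have := powR_ge0 (enorm q) alpha; lra.
  by have := le1r_powR (ltW gt1) (ltW a1); have := powR_ge0 (enorm q) alpha; lra.
have e6 : enorm (g q) * enorm q <= C0 * enorm q `^ alpha + C0 * enorm q.
  have : enorm (g q) * enorm q <= (C0 * enorm q `^ (alpha - 1) + C0) * enorm q.
    by rewrite ler_wpM2r.
  by rewrite mulrDl -mulrA [_ `^ _ * _]mulrC mulr_powRB1 // (lt_trans ltr01 a1).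
have e7 : enorm q `^ alpha = mu * (c / (4 * C0)) * enorm p `^ alpha.
  rewrite /q enormZ; last exact: ltW mu0.
  rewrite powRM; [|exact: ltW mu0|exact: enorm_ge0].
  by rewrite -muA mulr_powRB1; [|exact: ltW mu0|exact: lt_trans ltr01 a1].
have [H1 H2] := H p.
have e8 : mu * (c * enorm p `^ alpha - B) <= mu * vdot (g p) p by rewrite ler_pM2l.
have hh : C0 * (mu * (c / (4 * C0)) * enorm p `^ alpha) = mu * c / 4 * enorm p `^ alpha.
  by field; rewrite gt_eqF.
rewrite e7 in e5 e6.
have e9 : C0 * enorm q <= C0 * (1 + mu * (c / (4 * C0)) * enorm p `^ alpha).
  by rewrite ler_wpM2l // ltW.
have h00 := h0.
move: e1 e2 e3 e6 e8 e9 hh h00.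
rewrite -/q.
set X := enorm p `^ alpha. set V := vdot (g p) p. set W := vdot (g q) q.
set Gq := enorm (g q) * enorm q. set nq := enorm q.
move=> e1 e2 e3 e6 e8 e9 hh h1.
lra.
Qed.

End P.
Arguments pw_ab {R d h g alpha C0}.
Arguments pw_ba {R d h g alpha C0}.
Arguments pw_bc {R d h g alpha C0}.

Lemma const_pick (R : realType) (A B : R) : 0 < A ->
  exists K : R, 1 < K /\ K^-1 <= A /\ B <= K.
Proof.
move=> A0; exists (A^-1 + `|B| + 1).
have Ai : 0 < A^-1 by rewrite invr_gt0.
have nB := normr_ge0 B; have lB := ler_norm B.
split; first lra.
split; last lra.
rewrite -[X in _ <= X]invrK ler_pV2 ?inE ?unitfE ?gt_eqF //=; try lra.
Qed.

Lemma weaken (R : realType) (K A B X Y : R) : K^-1 <= A -> B <= K -> 0 <= X ->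
  A * X - B <= Y -> K^-1 * X - K <= Y.
Proof.
move=> h1 h2 h3 h4; have : K^-1 * X <= A * X by rewrite ler_wpM2r.
lra.
Qed.

Arguments weaken {R K A B X Y}.

Theorem proposition2p2 (R : realType) (d : nat) (Omega : set 'rV[R]_d)
  (H : 'rV[R]_d -> 'rV[R]_d -> R) (DH : 'rV[R]_d -> 'rV[R]_d -> 'rV[R]_d)
  (alpha : R) :
  open Omega -> 1 < alpha ->
  ae_in Omega (fun x => C1_with_gradient (H x) (DH x) /\ convex_fun (H x)) ->
  (exists C : R, 1 < C /\ ae_in Omega (fun x =>
     (forall p, enorm (DH x p) <= C * enorm p `^ (alpha - 1) + C) /\ H x 0 <= C)) ->
  ((exists C : R, 1 < C /\ cond_a Omega H alpha C) <->
   (exists C : R, 1 < C /\ cond_b Omega H DH alpha C)) /\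
  ((exists C : R, 1 < C /\ cond_b Omega H DH alpha C) <->
   (exists C : R, 1 < C /\ cond_c Omega H DH alpha C)).
Proof.
move=> _ a1 hreg [C0 [C01 hgr]].
have C00 : 0 < C0 by lra.
have hall := ae_and hreg hgr.
split; split.
- move=> [C [C1 hc]].
  have c0 : 0 < C^-1 by rewrite invr_gt0; lra.
  have [K [K1 [KA KB]]] := @const_pick R _ (C + C0) c0.
  exists K; split => //.
  apply: ae_mono (ae_and hall hc) => x [[[hC1 cvx] [gg h0]] hx] p.
  have [P1 P2] := pw_ab a1 C00 hC1 cvx gg h0 _ _ (ltW c0) hx p.
  split; first by apply: (weaken KA KB) => //; exact: powR_ge0.
  lra.
- move=> [C [C1 hc]].
  have c0 : 0 < C^-1 * (2^-1) `^ alpha by rewrite mulr_gt0 ?powR_gt0 // invr_gt0; lra.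
  have [K [K1 [KA KB]]] := @const_pick R _ (C + C) c0.
  exists K; split => //.
  apply: ae_mono (ae_and hall hc) => x [[[hC1 cvx] [gg h0]] hx] p.
  have Ci : 0 <= C^-1 by rewrite invr_ge0; lra.
  have P := pw_ba a1 C00 hC1 cvx gg h0 _ _ Ci hx p.
  by apply: (weaken KA KB) => //; exact: powR_ge0.
- move=> [C [C1 hc]].
  have c0 : 0 < C^-1 by rewrite invr_gt0; lra.
  pose mu := (C^-1 / (4 * C0)) `^ ((alpha - 1)^-1).
  have mu0 : 0 < mu by apply: powR_gt0; rewrite divr_gt0 // mulr_gt0.
  have m0 : 0 < mu * C^-1 / 2 by rewrite divr_gt0 // mulr_gt0.
  have [K [K1 [KA KB]]] := @const_pick R _ (mu * C + 2 * C0 + C) m0.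
  exists K; split => //.
  apply: ae_mono (ae_and hall hc) => x [[[hC1 cvx] [gg h0]] hx] p.
  have P := pw_bc a1 C00 hC1 cvx gg h0 _ _ c0 hx p.
  rewrite -/mu in P; clearbody mu.
  have mC : 0 <= mu * C by apply: mulr_ge0; [exact: ltW mu0 | lra].
  split; last by have := (hx p).2; lra.
  apply: (weaken KA _ (powR_ge0 _ _) P); lra.
- move=> [C [C1 hc]].
  have c0 : 0 < C^-1 by rewrite invr_gt0; lra.
  have [K [K1 [KA KB]]] := @const_pick R _ (C + C) c0.
  exists K; split => //.
  apply: ae_mono hc => x hx p.
  have [P1 P2] := hx p.
  split; last lra.
  apply: (weaken KA KB (powR_ge0 _ _)); lra.
Qed.
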